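(* Let $N\ge1$, $n\ge1$, $\gamma>0$, and let channel gains $g_{S,k}>0$, $g_{k,D}>0$ ($k=1,\dots,N$) satisfy $g_{S,1}\le g_{S,2}\le\cdots\le g_{S,N}$. Put $C_{a,b}=C(g_{a,b}\gamma)$ and $V_{a,b}=V(g_{a,b}\gamma)$ with $C(\rho)=\tfrac12\log(1+\rho)$ and $V(\rho)=\frac{\rho}{2}\frac{2+\rho}{(1+\rho)^2}(\log e)^2$. Let $\varepsilon_d'\in(0,\tfrac12)$. For $x=(x_1[1],\dots,x_N[N])$ with all $x_k[k]>0$ define, for $1\le k\le m\le N$, $$x_m[k]=\sqrt{\tfrac{n}{V_{S,m}}}\,(C_{S,m}-C_{S,k})+\sqrt{\tfrac{V_{S,m}}{V_{S,k}}}\,x_k[k],\qquad x_D[k]=\sqrt{\tfrac{n}{V_{k,D}}}\,(C_{k,D}-C_{S,k})+\sqrt{\tfrac{V_{S,k}}{V_{k,D}}}\,x_k[k].$$ Consider the problem of minimizing $\sum_{k=1}^N\sqrt{V_{S,k}}\,x_k[k]$ over all $x$ with $x_k[k]>0$ for all $k$ subject to $$\sum_{k=1}^N\Big(\sum_{m=k}^N Q(x_m[k])+Q(x_D[k])\Big)\le\varepsilon_d'.$$ Then every optimal solution $x$ of this problem satisfies $$\sum_{k=1}^N\Big(\sum_{m=k}^N Q(x_m[k])+Q(x_D[k])\Big)=\varepsilon_d'.$$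
   Context: $Q(x)=\int_x^\infty\frac{1}{\sqrt{2\pi}}e^{-t^2/2}\,dt$ is the Gaussian tail function. $C$ is the capacity and $V$ the channel dispersion of a real AWGN channel with SNR $\rho$; $S$ is the source, $D$ the destination, relays are indexed $1,\dots,N$, $g_{a,b}$ is the channel gain of link $a\to b$, $\gamma$ the transmit SNR, and $n$ the blocklength. The variable $x_m[k]$ stands for $Q^{-1}$ of the error probability of relay $m$ (resp. $D$ for $x_D[k]$) decoding message $W_k$. *)

(* Defs.v *)
From Stdlib Require Import Reals Lra.
From Coquelicot Require Import Coquelicot.
Open Scope R_scope.

Definition Qfun (x : R) : R :=
  RInt_gen (fun t => / sqrt (2 * PI) * exp (- t ^ 2 / 2)) (at_point x) (Rbar_locally p_infty).

Definition log2 (x : R) : R := ln x / ln 2.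

Definition Cap (rho : R) : R := / 2 * log2 (1 + rho).
Definition Disp (rho : R) : R :=
  rho / 2 * ((2 + rho) / (1 + rho) ^ 2) * (log2 (exp 1)) ^ 2.

Section Problem.
(* gS k = g_{S,k}, gD k = g_{k,D}, relays indexed 1..N *)
Variables (N n : nat) (gamma : R) (gS gD : nat -> R).

Definition CS (k : nat) := Cap (gS k * gamma).
Definition VS (k : nat) := Disp (gS k * gamma).
Definition CD (k : nat) := Cap (gD k * gamma).
Definition VD (k : nat) := Disp (gD k * gamma).

(* x k stands for x_k[k]; xm x m k = x_m[k]; xDst x k = x_D[k]. *)
Definition xm (x : nat -> R) (m k : nat) : R :=
  sqrt (INR n / VS m) * (CS m - CS k) + sqrt (VS m / VS k) * x k.
Definition xDst (x : nat -> R) (k : nat) : R :=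
  sqrt (INR n / VD k) * (CD k - CS k) + sqrt (VS k / VD k) * x k.

Definition err_sum (x : nat -> R) : R :=
  sum_n_m (fun k => sum_n_m (fun m => Qfun (xm x m k)) k N + Qfun (xDst x k)) 1 N.

Definition objective (x : nat -> R) : R :=
  sum_n_m (fun k => sqrt (VS k) * x k) 1 N.

Definition feasible (eps : R) (x : nat -> R) : Prop :=
  (forall k, (1 <= k <= N)%nat -> 0 < x k) /\ err_sum x <= eps.

Definition optimal (eps : R) (x : nat -> R) : Prop :=
  feasible eps x /\ forall y, feasible eps y -> objective x <= objective y.
End Problem.

(* Main.v *)
Require Import Defs.
From Stdlib Require Import Reals Lra Lia Classical.
From Coquelicot Require Import Coquelicot.
Open Scope R_scope.

Definition gf (t : R) : R := / sqrt (2 * PI) * exp (- t ^ 2 / 2).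
Definition cQ : R := / sqrt (2 * PI).

Lemma cQ_pos : 0 < cQ.
Proof. unfold cQ. apply Rinv_0_lt_compat, sqrt_lt_R0. pose proof PI_RGT_0. lra. Qed.

Lemma gf_cont t : continuous gf t.
Proof. apply (ex_derive_continuous (K:=R_AbsRing) (V:=R_NormedModule)). unfold gf. auto_derive. auto. Qed.

Lemma gf_ex a b : ex_RInt gf a b.
Proof. apply (ex_RInt_continuous (V:=R_CompleteNormedModule)). intros; apply gf_cont. Qed.

Lemma gf_nonneg t : 0 <= gf t.
Proof. unfold gf. pose proof cQ_pos. unfold cQ in H. pose proof (exp_pos (- t ^ 2 / 2)). nra. Qed.

Lemma gf_le t : gf t <= cQ.
Proof. unfold gf, cQ. pose proof cQ_pos. unfold cQ in H.
  assert (exp (- t ^ 2 / 2) <= 1).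
  { rewrite <- exp_0. destruct (Req_dec (- t^2/2) 0) as [E|E]. rewrite E; lra.
    left; apply exp_increasing. assert (0 <= t^2) by nra.
    destruct (Rle_lt_or_eq_dec _ _ H0) as [h|h]. lra. exfalso; apply E; nra. }
  nra. Qed.

Lemma gf_exp t : gf t <= cQ * exp (/2) * exp (- t).
Proof. unfold gf. fold cQ. rewrite Rmult_assoc, <- exp_plus.
  apply Rmult_le_compat_l. left; apply cQ_pos.
  assert (0 <= (t-1)^2) by apply pow2_ge_0.
  destruct (Req_dec (- t^2/2) (/2 + - t)) as [E|E]. rewrite E; lra.
  left; apply exp_increasing. destruct (Rle_lt_or_eq_dec _ _ H) as [h|h]. lra.
  exfalso; apply E; nra. Qed.

Lemma gf_bound a b : a <= b -> RInt gf a b <= cQ * exp (/2) * exp (- a).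
Proof.
  intros Hab.
  set (K := cQ * exp (/2)).
  assert (HK : 0 < K) by (unfold K; pose proof cQ_pos; pose proof (exp_pos (/2)); nra).
  assert (HI : is_RInt (fun t => K * exp (- t)) a b ((- K * exp (- b)) - (- K * exp (- a)))).
  { apply (is_RInt_derive (fun t => - K * exp (- t))).
    - intros x _. auto_derive. auto. ring.
    - intros x _. apply (ex_derive_continuous (fun t => K * exp (- t))). auto_derive. auto. }
  apply Rle_trans with (RInt (fun t => K * exp (- t)) a b).
  - apply RInt_le; auto. apply gf_ex. eexists; eauto.
    intros x _. unfold K. apply gf_exp.
  - rewrite (is_RInt_unique _ _ _ _ HI). pose proof (exp_pos (-b)). fold K. nra.
Qed.

Lemma gf_lim a : exists l, forall eps, 0 < eps -> exists M, forall b, M < b -> a <= b /\ Rabs (RInt gf a b - l) < eps.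
Proof.
  set (E := fun y => exists b, a <= b /\ y = RInt gf a b).
  assert (H1 : bound E). { exists (cQ * exp (/2) * exp (- a)). intros y [b [Hb ->]]. now apply gf_bound. }
  assert (H2 : exists y, E y). { exists (RInt gf a a). exists a. split; [lra|auto]. }
  destruct (completeness E H1 H2) as [l [Hub Hlub]].
  exists l. intros eps Heps.
  destruct (classic (exists b0, a <= b0 /\ l - eps < RInt gf a b0)) as [[b0 [Hb0 Hlt]]|Hn].
  - exists b0. intros b Hb. split. lra.
    assert (RInt gf a b = RInt gf a b0 + RInt gf b0 b).
    { symmetry. apply (RInt_Chasles (V:=R_CompleteNormedModule)); apply gf_ex. }
    assert (0 <= RInt gf b0 b). { apply RInt_ge_0. lra. apply gf_ex. intros; apply gf_nonneg. }
    assert (RInt gf a b <= l). { apply Hub. exists b. split; [lra|auto]. }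
    apply Rabs_def1; lra.
  - exfalso. assert (l <= l - eps). { apply Hlub. intros y [b [Hb ->]].
      apply Rnot_lt_le. intro. apply Hn. exists b. auto. }
    lra.
Qed.

Lemma Q_is a : is_RInt_gen gf (at_point a) (Rbar_locally p_infty) (Qfun a).
Proof.
  destruct (gf_lim a) as [l Hl].
  assert (H : is_RInt_gen gf (at_point a) (Rbar_locally p_infty) l).
  { intros P [eps HP]. destruct (Hl eps (cond_pos eps)) as [M HM].
    apply (Filter_prod _ _ _ (fun x => x = a) (fun b => M < b)).
    - reflexivity.
    - exists M. auto.
    - intros x y -> Hy. simpl. exists (RInt gf a y). split.
      apply (RInt_correct (V:=R_CompleteNormedModule)), gf_ex. apply HP. destruct (HM y Hy) as [_ Hr]. exact Hr. }
  unfold Qfun. fold gf. rewrite (is_RInt_gen_unique _ _ H). exact H.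
Qed.

Lemma Q_chasles u v : Qfun u = RInt gf u v + Qfun v.
Proof.
  assert (H1 : is_RInt_gen gf (at_point u) (at_point v) (RInt gf u v)).
  { apply is_RInt_gen_at_point. apply (RInt_correct (V:=R_CompleteNormedModule)), gf_ex. }
  pose proof (is_RInt_gen_Chasles gf v _ _ H1 (Q_is v)) as H.
  unfold Qfun at 1. fold gf. exact (is_RInt_gen_unique _ _ H).
Qed.

Lemma Q_lip u d : 0 <= d -> Qfun (u - d) <= Qfun u + cQ * d.
Proof.
  intros Hd. rewrite (Q_chasles (u - d) u).
  assert (RInt gf (u - d) u <= RInt (fun _ => cQ) (u - d) u).
  { apply RInt_le. lra. apply gf_ex. apply ex_RInt_const. intros; apply gf_le. }
  rewrite RInt_const in H. unfold scal in H; simpl in H; unfold mult in H; simpl in H.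
  replace (u - (u - d)) with d in H by ring. lra.
Qed.

Lemma Disp_pos r : 0 < r -> 0 < Disp r.
Proof.
  intros Hr. unfold Disp, log2. rewrite ln_exp.
  assert (0 < ln 2). { rewrite <- ln_1. apply ln_increasing; lra. }
  assert (0 < / ln 2) by (apply Rinv_0_lt_compat; auto).
  assert (0 < (1 + r)^2) by (apply pow_lt; lra).
  assert (0 < (2 + r) / (1 + r)^2) by (apply Rdiv_lt_0_compat; lra).
  assert (0 < (1 / ln 2)^2) by (apply pow_lt; unfold Rdiv; lra).
  assert (0 < r / 2) by lra.
  apply Rmult_lt_0_compat; [apply Rmult_lt_0_compat|]; auto.
Qed.

Lemma sum_nonneg (a : nat -> R) n m : (forall k, 0 <= a k) -> 0 <= sum_n_m a n m.
Proof.
  intros H. apply Rle_trans with (sum_n_m (fun _ => 0) n m).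
  rewrite sum_n_m_const. lra. apply sum_n_m_le. auto.
Qed.

Lemma sum_lin (u v : nat -> R) c n m :
  sum_n_m (fun k => u k + c * v k) n m = sum_n_m u n m + c * sum_n_m v n m.
Proof.
  rewrite <- (sum_n_m_mult_l (K:=R_Ring)).
  rewrite <- (sum_n_m_plus (G:=R_AbelianMonoid)). reflexivity.
Qed.

Theorem lemma2 (N n : nat) (gamma : R) (gS gD : nat -> R) (eps : R) (x : nat -> R) :
  (1 <= N)%nat -> (1 <= n)%nat -> 0 < gamma ->
  (forall k, (1 <= k <= N)%nat -> 0 < gS k /\ 0 < gD k) ->
  (forall k, (1 <= k < N)%nat -> gS k <= gS (S k)) ->
  0 < eps < / 2 ->
  optimal N n gamma gS gD eps x ->
  err_sum N n gamma gS gD x = eps.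
Proof.
  intros HN Hn Hg Hpos Hmono Heps [[Hxpos Herr] Hopt].
  destruct (Rle_lt_or_eq_dec _ _ Herr) as [Hlt|]; [exfalso|auto].
  set (err := err_sum N n gamma gS gD x) in *.
  set (s := fun m => sqrt (VS gamma gS m / VS gamma gS 1)).
  set (sD := sqrt (VS gamma gS 1 / VD gamma gD 1)).
  set (L := cQ * (sum_n_m s 1 N + sD)).
  assert (HL : 0 <= L).
  { unfold L. pose proof cQ_pos. assert (0 <= sum_n_m s 1 N) by (apply sum_nonneg; intros; apply sqrt_pos).
    assert (0 <= sD) by apply sqrt_pos. nra. }
  assert (Hx1 : 0 < x 1%nat) by (apply Hxpos; lia).
  set (w := (eps - err) / (L + 1)).
  assert (Hw : 0 < w) by (apply Rdiv_lt_0_compat; lra).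
  set (d := Rmin (x 1%nat / 2) w).
  assert (Hd : 0 < d) by (apply Rmin_pos; lra).
  assert (Hdw : d <= w) by apply Rmin_r.
  assert (Hdx : d <= x 1%nat / 2) by apply Rmin_l.
  set (y := fun k => if Nat.eqb k 1 then x 1%nat - d else x k).
  assert (Hy1 : y 1%nat = x 1%nat - d) by reflexivity.
  assert (Hyk : forall k, k <> 1%nat -> y k = x k).
  { intros k Hk. unfold y. destruct (Nat.eqb_spec k 1); [contradiction|auto]. }
  clearbody y.
  assert (HVS1 : 0 < VS gamma gS 1).
  { apply Disp_pos. destruct (Hpos 1%nat) as [h _]. lia. nra. }
  assert (Herry : err_sum N n gamma gS gD y <= err + L * d).
  { unfold err, err_sum. rewrite !(sum_Sn_m _ 1 N) by lia.
    rewrite (sum_n_m_ext_loc (fun k => sum_n_m (fun m => Qfun (xm n gamma gS y m k)) k N +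
       Qfun (xDst n gamma gS gD y k)) (fun k => sum_n_m (fun m => Qfun (xm n gamma gS x m k)) k N +
       Qfun (xDst n gamma gS gD x k)) 2 N).
    2:{ intros k Hk. unfold xm, xDst. rewrite (Hyk k) by lia. reflexivity. }
    unfold plus; simpl.
    assert (H1 : sum_n_m (fun m => Qfun (xm n gamma gS y m 1)) 1 N <=
                 sum_n_m (fun m => Qfun (xm n gamma gS x m 1)) 1 N + (cQ * d) * sum_n_m s 1 N).
    { rewrite <- sum_lin. apply sum_n_m_le. intros m.
      replace (xm n gamma gS y m 1) with (xm n gamma gS x m 1 - s m * d).
      2:{ unfold xm, s. rewrite Hy1. ring. }
      replace (cQ * d * s m) with (cQ * (s m * d)) by ring.
      apply Q_lip. pose proof (sqrt_pos (VS gamma gS m / VS gamma gS 1)). fold (s m) in H. nra. }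
    assert (H2 : Qfun (xDst n gamma gS gD y 1) <= Qfun (xDst n gamma gS gD x 1) + cQ * (sD * d)).
    { replace (xDst n gamma gS gD y 1) with (xDst n gamma gS gD x 1 - sD * d).
      2:{ unfold xDst, sD. rewrite Hy1. ring. }
      apply Q_lip. pose proof (sqrt_pos (VS gamma gS 1 / VD gamma gD 1)). fold sD in H. nra. }
    unfold L. rewrite (sum_Sn_m (fun m => Qfun (xm n gamma gS y m 1)) 1 N), (sum_Sn_m (fun m => Qfun (xm n gamma gS x m 1)) 1 N) in H1 by lia. unfold plus in H1; simpl in H1.
    assert (cQ * (sum_n_m s 1 N + sD) * d = cQ * d * sum_n_m s 1 N + cQ * (sD * d)) by ring.
    lra. }
  assert (HLd : L * d < eps - err).
  { assert (w * (L + 1) = eps - err) by (unfold w; field; lra). nra. }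
  assert (Hfeas : feasible N n gamma gS gD eps y).
  { split.
    - intros k Hk. destruct (Nat.eq_dec k 1) as [->|Hk1]. rewrite Hy1. lra.
      rewrite Hyk by auto. apply Hxpos; auto.
    - lra. }
  specialize (Hopt y Hfeas).
  unfold objective in Hopt. rewrite !(sum_Sn_m _ 1 N) in Hopt by lia.
  rewrite (sum_n_m_ext_loc (fun k => sqrt (VS gamma gS k) * y k) (fun k => sqrt (VS gamma gS k) * x k) 2 N) in Hopt.
  2:{ intros k Hk. rewrite Hyk by lia. reflexivity. }
  unfold plus in Hopt; simpl in Hopt. rewrite Hy1 in Hopt.
  assert (0 < sqrt (VS gamma gS 1)) by (apply sqrt_lt_R0; auto).
  nra.
Qed.
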